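(* Let $\alpha\in(0,1)$ and let $\phi:[0,1]\to[0,\infty)$ be twice continuously differentiable on $(0,1]$ with finite constants $W>0$, $c$, $c'$ such that $(2-\alpha)Wp^{\alpha-2}+c'\le|\phi^{(2)}(p)|\le(2-\alpha)Wp^{\alpha-2}+c$ for all $p\in(0,1]$. Then for $\Delta\in(0,1]$ and positive integers $L$, $$E_L(\phi,[0,\Delta])\lesssim\Big(\frac{\Delta}{L^2}\Big)^{\alpha}.$$
   Context: $E_L(\phi,I)=\inf_{q}\sup_{x\in I}|\phi(x)-q(x)|$, the infimum over all real polynomials $q$ of degree at most $L$. $a\lesssim b$ means $a\le Cb$ for a positive constant $C$ not depending on $L,\Delta$ (possibly on $\phi,\alpha$). *)

(* Defs.v *)
From Stdlib Require Import Reals.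
From Coquelicot Require Import Coquelicot.
Open Scope R_scope.

Definition poly_eval (a : nat -> R) (L : nat) (x : R) : R :=
  sum_f_R0 (fun k => a k * x ^ k) L.

Definition sup_err (phi : R -> R) (a : nat -> R) (L : nat) (lo hi : R) : Rbar :=
  Lub_Rbar (fun y => exists x, lo <= x <= hi /\ y = Rabs (phi x - poly_eval a L x)).

(* E_L(phi, [lo,hi]) = inf over real polynomials q of degree <= L of
   sup_{x in [lo,hi]} |phi x - q x|  (an extended real; +oo if all sups are +oo). *)
Definition E_L (phi : R -> R) (L : nat) (lo hi : R) : Rbar :=
  Glb_Rbar (fun e : R => exists a : nat -> R, sup_err phi a L lo hi = Finite e).

(* Main.v *)
Require Import Defs.
From Stdlib Require Import Reals Lra Lia.
From Coquelicot Require Import Coquelicot.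
Open Scope R_scope.

Definition span (e : nat -> R -> R) (n : nat) (f : R -> R) :=
  exists c : nat -> R, forall t, f t = sum_f_R0 (fun k => c k * e k t) n.

Lemma span_ext e n f g : (forall t, f t = g t) -> span e n f -> span e n g.
Proof. intros H [c Hc]. exists c. intros t. rewrite <- H. apply Hc. Qed.

Lemma span_add e n f g : span e n f -> span e n g -> span e n (fun t => f t + g t).
Proof.
  intros [c Hc] [d Hd]. exists (fun k => c k + d k). intros t.
  rewrite Hc, Hd, <- sum_plus. apply sum_eq. intros; ring.
Qed.

Lemma span_scal e n f a : span e n f -> span e n (fun t => a * f t).
Proof.
  intros [c Hc]. exists (fun k => a * c k). intros t.
  rewrite Hc, scal_sum. apply sum_eq. intros; ring.
Qed.

Lemma sum_zero (An : nat -> R) N : (forall i, (i <= N)%nat -> An i = 0) -> sum_f_R0 An N = 0.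
Proof.
  induction N; intros H; simpl. apply H; lia.
  rewrite IHN. rewrite H; [ring|lia]. intros; apply H; lia.
Qed.

Lemma span_mono e n m f : (n <= m)%nat -> span e n f -> span e m f.
Proof.
  intros Hnm [c Hc]. exists (fun k => if Nat.leb k n then c k else 0). intros t.
  rewrite Hc. induction Hnm.
  - apply sum_eq. intros i Hi. destruct (Nat.leb_spec i n); [reflexivity| lia].
  - rewrite tech5. rewrite <- IHHnm. destruct (Nat.leb_spec (S m) n); [lia|ring].
Qed.

Lemma span_zero e n : span e n (fun _ => 0).
Proof. exists (fun _ => 0). intros t. symmetry; apply sum_zero. intros; ring. Qed.

Lemma span_basis e n i : (i <= n)%nat -> span e n (e i).
Proof.
  intros Hi. apply span_mono with i; auto.
  exists (fun k => if Nat.eqb k i then 1 else 0). intros t.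
  destruct i.
  - simpl. ring.
  - rewrite tech5. rewrite sum_zero. rewrite Nat.eqb_refl. ring.
    intros j Hj. destruct (Nat.eqb_spec j (S i)); [lia|ring].
Qed.

Lemma span_sum e m n (b : nat -> R) (F : nat -> R -> R) :
  (forall k, (k <= n)%nat -> span e m (F k)) ->
  span e m (fun t => sum_f_R0 (fun k => b k * F k t) n).
Proof.
  induction n; intros H.
  - simpl. apply span_scal. apply H; lia.
  - simpl. apply span_add. apply IHn. intros; apply H; lia.
    apply span_scal. apply H; lia.
Qed.

Definition pe (k : nat) (x : R) := x ^ k.

Lemma span_pe_poly n f : span pe n f -> exists a, forall x, f x = sum_f_R0 (fun k => a k * x ^ k) n.
Proof. intros [c Hc]. exists c. exact Hc. Qed.

Lemma span_pe_mulx n f : span pe n f -> span pe (S n) (fun x => x * f x).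
Proof.
  intros [c Hc]. exists (fun k => match k with O => 0 | S k' => c k' end). intros x.
  rewrite Hc. rewrite (decomp_sum _ (S n)) by lia. simpl pred. unfold pe.
  rewrite scal_sum. simpl. rewrite Rmult_0_l, Rplus_0_l. apply sum_eq. intros; simpl; ring.
Qed.

Lemma span_pe_const n a : span pe n (fun _ => a).
Proof.
  apply span_mono with O; [lia|]. exists (fun _ => a). intros; simpl; unfold pe; simpl; ring.
Qed.

Definition cs (k : nat) (t : R) := cos (INR k * t).

Lemma cos_cos a b : cos a * cos b = (cos (a + b) + cos (a - b)) / 2.
Proof. rewrite cos_plus, cos_minus. field. Qed.

Lemma span_cs_mulcos m j h : span cs m h -> span cs (m + j) (fun t => cos (INR j * t) * h t).
Proof.
  intros [c Hc].
  apply span_ext with (fun t => sum_f_R0 (fun k => c k * (cos (INR j * t) * cs k t)) m).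
  { intros t. rewrite Hc, scal_sum. apply sum_eq. intros; ring. }
  apply span_sum. intros k Hk.
  apply span_ext with (fun t => /2 * cs (j + k) t + /2 * (if Nat.leb j k then cs (k - j) t else cs (j - k) t)).
  { intros t. unfold cs. rewrite cos_cos. rewrite plus_INR.
    destruct (Nat.leb_spec j k).
    - rewrite minus_INR by lia. replace (INR j * t - INR k * t) with (- ((INR k - INR j) * t)) by ring.
      rewrite cos_neg. replace (INR j * t + INR k * t) with ((INR j + INR k) * t) by ring. field.
    - rewrite minus_INR by lia. replace (INR j * t - INR k * t) with ((INR j - INR k) * t) by ring.
      replace (INR j * t + INR k * t) with ((INR j + INR k) * t) by ring. field. }
  apply span_add; apply span_scal. apply span_basis; lia.
  destruct (Nat.leb_spec j k); apply span_basis; lia.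
Qed.

Lemma span_cs_mul n m f h : span cs n f -> span cs m h -> span cs (n + m) (fun t => f t * h t).
Proof.
  intros [c Hc] Hh.
  apply span_ext with (fun t => sum_f_R0 (fun j => c j * (cos (INR j * t) * h t)) n).
  { intros t. rewrite Hc. rewrite Rmult_comm, scal_sum. apply sum_eq. intros; unfold cs; ring. }
  apply span_sum. intros j Hj. apply span_mono with (m + j)%nat; [lia|].
  apply span_cs_mulcos; auto.
Qed.



Lemma cheb_poly (Dl : R) : Dl <> 0 -> forall k,
  exists P, span pe k P /\ forall th, cos (INR k * th) = P (Dl * (1 - cos th) / 2).
Proof.
  intros HD.
  assert (forall k, (exists P, span pe k P /\ forall th, cos (INR k * th) = P (Dl * (1 - cos th) / 2)) /\
                    (exists P, span pe (S k) P /\ forall th, cos (INR (S k) * th) = P (Dl * (1 - cos th) / 2))).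
  { induction k.
    - split.
      + exists (fun _ => 1). split. apply span_pe_const. intros; simpl. rewrite Rmult_0_l, cos_0; auto.
      + exists (fun x => 1 - 2 / Dl * x). split.
        * apply span_ext with (fun x => 1 + (-2/Dl) * (x * 1)). intros; field; auto.
          apply span_add. apply span_pe_const. apply span_scal.
          apply span_pe_mulx. apply span_pe_const.
        * intros th. simpl. field_simplify_eq; auto. f_equal; ring.
    - destruct IHk as [[P0 [HP0 E0]] [P1 [HP1 E1]]].
      split. exists P1; split; auto.
      exists (fun x => 2 * ((1 - 2 / Dl * x) * P1 x) - P0 x). split.
      + apply span_add. apply span_scal.
        apply span_ext with (fun x => P1 x + (-2/Dl) * (x * P1 x)). intros; field; auto.
        apply span_add. apply span_mono with (S k); auto.
        apply span_scal. apply span_pe_mulx; auto.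
        apply span_ext with (fun x => -1 * P0 x). intros; ring. apply span_scal.
        apply span_mono with k; auto.
      + intros th. rewrite <- E1, <- E0.
        replace (1 - 2 / Dl * (Dl * (1 - cos th) / 2)) with (cos th) by (field; auto).
        rewrite (Rmult_comm (cos th)), cos_cos. rewrite !S_INR.
        replace ((INR k + 1 + 1) * th) with ((INR k + 1) * th + th) by ring.
        replace (INR k * th) with ((INR k + 1) * th - th) by ring. field. }
  intros k; apply H.
Qed.

Lemma sin_abs_le x : Rabs (sin x) <= Rabs x.
Proof.
  destruct (MVT_gen sin 0 x cos) as [c [Hc E]].
  - intros; apply is_derive_sin.
  - intros; apply continuity_sin.
  - rewrite sin_0, Rminus_0_r, Rminus_0_r in E. rewrite E, Rabs_mult.
    pose proof (COS_bound c). assert (Rabs (cos c) <= 1) by (apply Rabs_le; lra).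
    pose proof (Rabs_pos x). nra.
Qed.

Lemma cos_lb2 x : 1 - x^2/2 <= cos x.
Proof.
  assert (E : cos x = 1 - 2 * sin (x/2) * sin (x/2)).
  { rewrite <- cos_2a_sin. f_equal; field. }
  rewrite E.
  pose proof (sin_abs_le (x/2)). pose proof (Rabs_pos (sin (x/2))).
  assert (Rabs (sin (x/2)) * Rabs (sin (x/2)) <= Rabs (x/2) * Rabs (x/2)) by nra.
  rewrite <- !Rabs_mult in H1. rewrite !Rabs_right in H1.
  nra. apply Rle_ge; nra. apply Rle_ge; nra.
Qed.

Lemma sin_half_lb t : 0 <= t <= PI -> t / 8 <= sin (t / 2).
Proof.
  intros Ht. pose proof PI_4. pose proof PI2_3_2.
  destruct (SIN (t/2)) as [H1 _]; try lra.
  assert (E : sin_lb (t/2) = (t/2) - (t/2)^3/6 + (t/2)^5/120 - (t/2)^7/5040).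
  { unfold sin_lb, sin_approx, sin_term. simpl. field. }
  rewrite E in H1. set (a := t/2) in *.
  assert (0 <= a <= 2) by (unfold a; lra).
  assert (a^2 <= 4) by nra.
  assert (a^6 <= 64).
  { replace (a^6) with (a^2 * a^2 * a^2) by ring. assert (0 <= a^2) by nra.
    assert (a^2 * a^2 <= 16) by nra. nra. }
  assert (0 <= a^5) by (apply pow_le; lra).
  assert (a^7 <= 64 * a) by (replace (a^7) with (a^6 * a) by ring; nra).
  assert (a^3 <= 4 * a) by (replace (a^3) with (a^2 * a) by ring; nra).
  assert (t = 2 * a) by (unfold a; field). lra.
Qed.

Lemma cos_ge_half x : Rabs x <= 1/2 -> 1/2 <= cos x.
Proof.
  intros H. pose proof (cos_lb2 x). assert (x^2 <= 1/4).
  { pose proof (Rabs_pos x). replace (x^2) with (Rabs x * Rabs x). nra.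
    rewrite <- Rabs_mult. rewrite Rabs_right. ring. apply Rle_ge; nra. }
  lra.
Qed.

Fixpoint Dk (r : nat) (t : R) : R :=
  match r with O => 1 | S r' => Dk r' t + 2 * cos (INR r * t) end.

Lemma Dk_bound r t : Rabs (Dk r t) <= 2 * INR r + 1.
Proof.
  induction r; cbn [Dk]. rewrite Rabs_R1; simpl; lra.
  eapply Rle_trans. apply Rabs_triang. rewrite Rabs_mult, (Rabs_right 2) by lra.
  pose proof (COS_bound (INR (S r) * t)). assert (Rabs (cos (INR (S r) * t)) <= 1) by (apply Rabs_le; lra).
  rewrite S_INR in *. lra.
Qed.

Lemma Dk_sin r t : Dk r t * sin (t / 2) = sin ((INR r + /2) * t).
Proof.
  induction r; cbn [Dk].
  - simpl. rewrite Rmult_1_l. f_equal; field.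
  - rewrite Rmult_plus_distr_r, IHr. rewrite S_INR.
    replace ((INR r + /2) * t) with ((INR r + 1) * t - t/2) by field.
    replace ((INR r + 1 + /2) * t) with ((INR r + 1) * t + t/2) by field.
    rewrite sin_plus, sin_minus. ring.
Qed.

Lemma Dk_abs_le r t : 0 < t <= PI -> Rabs (Dk r t) <= 8 / t.
Proof.
  intros Ht. pose proof (sin_half_lb t ltac:(lra)).
  pose proof (Dk_sin r t). assert (Rabs (Dk r t) * sin (t/2) <= 1).
  { rewrite <- (Rabs_right (sin (t/2))) by lra. rewrite <- Rabs_mult, H0.
    pose proof (SIN_bound ((INR r + / 2) * t)). apply Rabs_le; lra. }
  apply Rmult_le_reg_r with (t/8). lra.
  replace (8 / t * (t/8)) with 1 by (field; lra).
  pose proof (Rabs_pos (Dk r t)). nra.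
Qed.

Lemma Dk_lower r t : 0 <= t -> INR r * t <= 1/2 -> INR r + 1 <= Dk r t.
Proof.
  induction r; intros H0 H1; cbn [Dk].
  - simpl; lra.
  - rewrite S_INR in *. assert (INR r * t <= 1/2) by (pose proof (pos_INR r); nra).
    specialize (IHr H0 H). pose proof (cos_ge_half (INR (S r) * t)).
    rewrite S_INR in H2. assert (1/2 <= cos ((INR r + 1) * t)).
    { apply H2. pose proof (pos_INR r). rewrite Rabs_right; nra. }
    lra.
Qed.

Lemma Dk_cont r t : continuous (Dk r) t.
Proof.
  induction r; cbn [Dk]. apply continuous_const.
  apply (continuous_plus (Dk r)). auto. apply (continuous_mult (fun _ => 2)).
  apply continuous_const. apply continuous_cos_comp.
  apply (continuous_mult (fun _ => INR (S r))). apply continuous_const. apply continuous_id.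
Qed.

Lemma Dk_span r : span cs r (Dk r).
Proof.
  induction r; cbn [Dk].
  - exists (fun _ => 1). intros; unfold cs; simpl. rewrite Rmult_0_l, cos_0. ring.
  - apply span_add. apply span_mono with r; auto.
    apply span_scal. apply span_ext with (cs (S r)). intros; reflexivity. apply span_basis; lia.
Qed.

Definition Kr (r : nat) (t : R) := Dk r t * Dk r t * (Dk r t * Dk r t).

Lemma Kr_span r : span cs (4 * r) (Kr r).
Proof.
  apply span_mono with ((r + r) + (r + r))%nat. lia.
  unfold Kr. apply span_cs_mul; apply span_cs_mul; apply Dk_span.
Qed.

Lemma Kr_nonneg r t : 0 <= Kr r t.
Proof. unfold Kr. apply Rmult_le_pos; apply Rle_0_sqr. Qed.

Lemma Kr_cont r t : continuous (Kr r) t.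
Proof.
  unfold Kr. apply (continuous_mult (fun t => Dk r t * Dk r t));
  apply (continuous_mult (Dk r)); apply Dk_cont.
Qed.

Lemma ex_RInt_cont (f : R -> R) a b : (forall t, continuous f t) -> ex_RInt f a b.
Proof. intros H. apply (ex_RInt_continuous (V := R_CompleteNormedModule)). intros; apply H. Qed.

Lemma cont_of_der (f : R -> R) x : ex_derive f x -> continuous f x.
Proof. intros H. apply continuity_pt_filterlim. apply derivable_continuous_pt. apply ex_derive_Reals_0. exact H. Qed.

Lemma RInt_scal_R (f : R -> R) a b l : ex_RInt f a b -> RInt (fun x => l * f x) a b = l * RInt f a b.
Proof. intros H. apply (RInt_scal (V := R_CompleteNormedModule) f a b l); auto. Qed.

Lemma RInt_Chasles_R (f : R -> R) a b c : ex_RInt f a b -> ex_RInt f b c ->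
  RInt f a c = RInt f a b + RInt f b c.
Proof. intros. rewrite <- (RInt_Chasles f a b c); auto. Qed.

Lemma J_lower r : (INR r + 1)^3 / 2 <= RInt (Kr r) 0 PI.
Proof.
  pose proof (pos_INR r) as Hr. pose proof PI2_3_2.
  set (d := / (2 * (INR r + 1))).
  assert (Hd : 0 < d <= 1/2). { unfold d. split. apply Rinv_0_lt_compat; lra.
    assert (/ (2*(INR r+1)) <= /2) by (apply Rinv_le_contravar; lra). lra. }
  rewrite (RInt_Chasles_R _ 0 d PI); try apply ex_RInt_cont; try apply Kr_cont.
  assert (0 <= RInt (Kr r) d PI).
  { apply RInt_ge_0. lra. apply ex_RInt_cont, Kr_cont. intros; apply Kr_nonneg. }
  assert (RInt (fun _ => (INR r + 1)^4) 0 d <= RInt (Kr r) 0 d).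
  { apply RInt_le. lra. apply ex_RInt_cont; intros; apply continuous_const.
    apply ex_RInt_cont, Kr_cont. intros t Ht.
    assert (INR r + 1 <= Dk r t). apply Dk_lower. lra.
    { apply Rle_trans with (INR r * d). apply Rmult_le_compat_l; lra.
      unfold d. apply Rmult_le_reg_r with (2 * (INR r + 1)). lra.
      rewrite Rmult_assoc, Rinv_l by lra. nra. }
    unfold Kr. simpl. assert (0 <= INR r + 1) by lra. 
    assert ((INR r + 1) * (INR r + 1) <= Dk r t * Dk r t) by nra. nra. }
  rewrite RInt_const in H1. unfold scal in H1; simpl in H1. unfold mult in H1; simpl in H1.
  assert ((d - 0) * (INR r + 1)^4 = (INR r + 1)^3 / 2).
  { unfold d. field. lra. }
  lra.
Qed.

Lemma RInt_sq d : RInt (fun t => t^2) 0 d = d^3/3.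
Proof.
  apply is_RInt_unique.
  replace (d^3/3) with (minus ((fun t => t^3/3) d) ((fun t => t^3/3) 0)).
  apply (is_RInt_derive (fun t => t^3/3) (fun t => t^2)).
  intros. auto_derive. auto. field.
  intros. apply cont_of_der; auto_derive; auto.
  unfold minus, plus, opp; simpl. field.
Qed.

Lemma RInt_invsq a b : 0 < a <= b -> RInt (fun t => / t^2) a b = / a - / b.
Proof.
  intros H. apply is_RInt_unique.
  replace (/a - /b) with (minus ((fun t => - / t) b) ((fun t => - / t) a)).
  apply (is_RInt_derive (fun t => - / t) (fun t => / t^2)).
  intros x Hx. rewrite Rmin_left, Rmax_right in Hx by lra.
  auto_derive. lra. field. lra.
  intros x Hx. rewrite Rmin_left, Rmax_right in Hx by lra.
  apply cont_of_der; auto_derive; nra.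
  unfold minus, plus, opp; simpl. ring.
Qed.

Lemma M2_upper r : RInt (fun t => t^2 * Kr r t) 0 PI <= 4200 * (INR r + 1).
Proof.
  pose proof (pos_INR r) as Hr. pose proof PI2_3_2.
  set (d := / (INR r + 1)).
  assert (Hd : 0 < d <= 1). { unfold d. split. apply Rinv_0_lt_compat; lra.
    rewrite <- Rinv_1. apply Rinv_le_contravar; lra. }
  assert (Hc : forall t, continuous (fun t => t^2 * Kr r t) t).
  { intros t. apply (continuous_mult (fun t => t^2)). 
    apply cont_of_der; auto_derive; auto.
    apply Kr_cont. }
  rewrite (RInt_Chasles_R _ 0 d PI); try apply ex_RInt_cont; auto.
  assert (RInt (fun t => t^2 * Kr r t) 0 d <= RInt (fun t => 16 * (INR r + 1)^4 * t^2) 0 d).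
  { apply RInt_le. lra. apply ex_RInt_cont; auto. apply ex_RInt_cont.
    intros t. apply cont_of_der; auto_derive; auto.
    intros t Ht. pose proof (Dk_bound r t).
    assert (Dk r t * Dk r t <= 4 * (INR r + 1)^2).
    { replace (Dk r t * Dk r t) with (Rabs (Dk r t) * Rabs (Dk r t)).
      pose proof (Rabs_pos (Dk r t)). nra. rewrite <- Rabs_mult. apply Rabs_right. apply Rle_ge, Rle_0_sqr. }
    unfold Kr. assert (0 <= Dk r t * Dk r t) by apply Rle_0_sqr.
    assert (Dk r t * Dk r t * (Dk r t * Dk r t) <= 16 * (INR r + 1)^4).
    { assert (0 <= 4 * (INR r + 1)^2) by nra. 
      apply Rle_trans with (4 * (INR r + 1)^2 * (4 * (INR r + 1)^2)). 
      apply Rmult_le_compat; auto. right; ring. }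
    assert (0 <= t^2) by nra. nra. }
  assert (RInt (fun t => t^2 * Kr r t) d PI <= RInt (fun t => 4096 * / t^2) d PI).
  { apply RInt_le. lra. apply ex_RInt_cont; auto. 
    apply (ex_RInt_ext (fun t => 4096 * / t^2)). intros; auto.
    apply (ex_RInt_continuous (V := R_CompleteNormedModule)). intros z Hz. rewrite Rmin_left, Rmax_right in Hz by lra.
    apply cont_of_der; auto_derive; nra.
    intros t Ht. pose proof (Dk_abs_le r t ltac:(lra)).
    assert (Dk r t * Dk r t <= 64 / t^2).
    { replace (Dk r t * Dk r t) with (Rabs (Dk r t) * Rabs (Dk r t)).
      pose proof (Rabs_pos (Dk r t)). replace (64 / t^2) with (8/t * (8/t)) by (field; lra). nra.
      rewrite <- Rabs_mult. apply Rabs_right. apply Rle_ge, Rle_0_sqr. }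
    unfold Kr. assert (0 <= Dk r t * Dk r t) by apply Rle_0_sqr.
    assert (Dk r t * Dk r t * (Dk r t * Dk r t) <= 64 / t^2 * (64 / t^2)).
    { apply Rmult_le_compat; auto. }
    replace (4096 * / t^2) with (t^2 * (64/t^2 * (64/t^2))) by (field; lra).
    apply Rmult_le_compat_l. nra. auto. }
  rewrite RInt_scal_R in H0. rewrite RInt_sq in H0. 2: apply ex_RInt_cont; intros; 
    apply cont_of_der; auto_derive; auto.
  rewrite RInt_scal_R in H1. rewrite RInt_invsq in H1 by lra.
  2: { apply (ex_RInt_ext (fun t => / t^2)). intros; auto.
    apply (ex_RInt_continuous (V := R_CompleteNormedModule)). intros z Hz. rewrite Rmin_left, Rmax_right in Hz by lra.
    apply cont_of_der; auto_derive; nra. }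
  assert (16 * (INR r + 1)^4 * (d^3/3) <= 6 * (INR r + 1)).
  { replace (16 * (INR r + 1)^4 * (d^3/3)) with (16/3 * (INR r + 1)) by (unfold d; field; lra). lra. } 
  assert (4096 * (/ d - / PI) <= 4096 * (INR r + 1)).
  { unfold d. rewrite Rinv_inv. assert (0 < / PI) by (apply Rinv_0_lt_compat; lra). lra. }
  lra.
Qed.

Ltac fixeq := match goal with |- ?x = ?y => change (@eq R x y) end.

Lemma RInt_plus_R (f g : R -> R) a b : ex_RInt f a b -> ex_RInt g a b ->
  RInt (fun x => f x + g x) a b = RInt f a b + RInt g a b.
Proof. intros. apply (RInt_plus (V := R_CompleteNormedModule)); auto. Qed.

Lemma RInt_minus_R (f g : R -> R) a b : ex_RInt f a b -> ex_RInt g a b ->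
  RInt (fun x => f x - g x) a b = RInt f a b - RInt g a b.
Proof. intros. apply (RInt_minus (V := R_CompleteNormedModule)); auto. Qed.

Lemma RInt_lin_R (f : R -> R) u v a b : ex_RInt f (u * a + v) (u * b + v) ->
  RInt (fun y => u * f (u * y + v)) a b = RInt f (u * a + v) (u * b + v).
Proof. intros. apply (RInt_comp_lin (V := R_CompleteNormedModule)); auto. Qed.

Lemma RInt_swap_R (f : R -> R) a b : ex_RInt f a b -> RInt f b a = - RInt f a b.
Proof. intros. rewrite <- (opp_RInt_swap (V := R_CompleteNormedModule)); auto. Qed.

Lemma RInt_point_R (f : R -> R) a : RInt f a a = 0.
Proof. apply (RInt_point (V := R_CompleteNormedModule)). Qed.

Lemma cont_aff (f : R -> R) u v t : (forall x, continuous f x) -> continuous (fun t => f (u * t + v)) t.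
Proof.
  intros H. apply (continuous_comp (fun t => u * t + v) f). apply cont_of_der; auto_derive; auto. apply H.
Qed.

Lemma cont_neg (f : R -> R) t : (forall x, continuous f x) -> continuous (fun t => f (- t)) t.
Proof.
  intros H. apply (continuous_ext (fun t => f (-1 * t + 0))). intros; f_equal; ring. apply cont_aff; auto.
Qed.

Lemma cont_mul (f g : R -> R) t : continuous f t -> continuous g t -> continuous (fun t => f t * g t) t.
Proof. intros. apply (continuous_mult f g); auto. Qed.

Lemma cont_add (f g : R -> R) t : continuous f t -> continuous g t -> continuous (fun t => f t + g t) t.
Proof. intros. apply (continuous_plus f g); auto. Qed.

Lemma cont_opp (f : R -> R) t : continuous f t -> continuous (fun t => - f t) t.
Proof. intros. apply (continuous_opp f); auto. Qed.

Lemma RInt_sym (f : R -> R) a : (forall x, continuous f x) ->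
  RInt f (-a) a = RInt (fun t => f t + f (-t)) 0 a.
Proof.
  intros Hf.
  rewrite (RInt_Chasles_R f (-a) 0 a) by (apply ex_RInt_cont; auto).
  rewrite RInt_plus_R by (apply ex_RInt_cont; auto; intros; apply cont_neg; auto).
  assert (RInt f (-a) 0 = RInt (fun t => f (-t)) 0 a).
  { pose proof (RInt_lin_R f (-1) 0 0 a). 
    replace (-1 * 0 + 0) with 0 in H by ring. replace (-1 * a + 0) with (-a) in H by ring.
    rewrite (RInt_swap_R f 0 (-a)) by (apply ex_RInt_cont; auto).
    rewrite <- H by (apply ex_RInt_cont; auto).
    rewrite (RInt_ext _ (fun y => -1 * (f (-y)))) by (intros; f_equal; f_equal; ring).
    rewrite (RInt_scal_R (fun y => f (-y)) 0 a (-1)); [fixeq; ring | apply ex_RInt_cont; intros; apply cont_neg; auto]. }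
  rewrite H. fixeq; ring.
Qed.

Lemma RInt_periodic (F : R -> R) a : (forall x, continuous F x) -> (forall x, F (x + 2 * PI) = F x) ->
  RInt F a (a + 2 * PI) = RInt F (-PI) PI.
Proof.
  intros Hc Hp.
  rewrite (RInt_Chasles_R F a (-PI) (a + 2 * PI)) by (apply ex_RInt_cont; auto).
  rewrite (RInt_Chasles_R F (-PI) PI (a + 2 * PI)) by (apply ex_RInt_cont; auto).
  assert (RInt F PI (a + 2 * PI) = RInt F (-PI) a).
  { pose proof (RInt_lin_R F 1 (2 * PI) (-PI) a).
    replace (1 * - PI + 2 * PI) with PI in H by ring. replace (1 * a + 2 * PI) with (a + 2 * PI) in H by ring.
    rewrite <- H by (apply ex_RInt_cont; auto).
    apply RInt_ext. intros. rewrite Rmult_1_l, Rmult_1_l. apply Hp. }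
  rewrite H. rewrite (RInt_swap_R F (-PI) a) by (apply ex_RInt_cont; auto). fixeq; ring.
Qed.

Lemma RInt_sum_R (F : nat -> R -> R) n a b : (forall k x, continuous (F k) x) ->
  RInt (fun s => sum_f_R0 (fun k => F k s) n) a b = sum_f_R0 (fun k => RInt (F k) a b) n.
Proof.
  intros H. induction n; simpl. reflexivity.
  rewrite RInt_plus_R. rewrite IHn. reflexivity.
  apply ex_RInt_cont. intros x. clear IHn. induction n; simpl. apply H. apply cont_add; auto.
  apply ex_RInt_cont; auto.
Qed.

Lemma Dk_even r t : Dk r (-t) = Dk r t.
Proof. induction r; cbn [Dk]. auto. rewrite IHr. f_equal. f_equal. rewrite <- cos_neg. f_equal; ring. Qed.

Lemma Kr_even r t : Kr r (-t) = Kr r t.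
Proof. unfold Kr. rewrite Dk_even. auto. Qed.

Lemma Dk_per r t : Dk r (t + 2 * PI) = Dk r t.
Proof.
  induction r; cbn [Dk]. auto. rewrite IHr. f_equal. f_equal.
  rewrite <- (cos_period (INR (S r) * t) (S r)). apply f_equal. ring.
Qed.

Lemma Kr_per r t : Kr r (t + 2 * PI) = Kr r t.
Proof. unfold Kr. rewrite Dk_per. auto. Qed.

Lemma rp_split t m beta : 0 < t -> 1 <= m -> 0 < beta < 2 ->
  Rpower t beta <= Rpower m (-beta) * (1 + (m * t)^2).
Proof.
  intros Ht Hm Hb.
  assert (E : Rpower t beta = Rpower m (-beta) * Rpower (m * t) beta).
  { rewrite <- Rpower_mult_distr by lra. rewrite <- Rmult_assoc. rewrite Rpower_Ropp.
    rewrite Rinv_l. ring. apply Rgt_not_eq. unfold Rpower. apply exp_pos. }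
  rewrite E. apply Rmult_le_compat_l. left; unfold Rpower; apply exp_pos.
  assert (0 < m * t) by nra.
  destruct (Rle_dec (m * t) 1).
  - assert (Rpower (m * t) beta <= Rpower 1 beta) by (apply Rle_Rpower_l; lra).
    unfold Rpower at 2 in H0. rewrite ln_1, Rmult_0_r, exp_0 in H0. nra.
  - assert (Rpower (m * t) beta <= Rpower (m * t) 2) by (apply Rle_Rpower; lra).
    replace 2 with (INR 2) in H0 by (simpl; ring). rewrite Rpower_pow in H0 by lra. lra.
Qed.

Lemma jackson (g : R -> R) (A beta : R) (r : nat) :
  0 < beta < 2 -> 0 <= A ->
  (forall t, continuous g t) -> (forall t, g (-t) = g t) -> (forall t, g (t + 2 * PI) = g t) ->
  (forall th t, 0 < t -> t <= PI -> Rabs (g (th + t) + g (th - t) - 2 * g th) <= A * Rpower t beta) ->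
  exists P, span cs (4 * r) P /\
    forall th, Rabs (g th - P th) <= 4201 * A * Rpower (INR r + 1) (- beta).
Proof.
  intros Hb HA Hgc Hge Hgp Hd2.
  pose proof (pos_INR r) as Hr. pose proof PI2_3_2 as HPI.
  set (J := RInt (Kr r) 0 PI).
  set (I0 := RInt (Kr r) (-PI) PI).
  assert (HJ : (INR r + 1)^3 / 2 <= J) by apply J_lower.
  assert (HI0 : I0 = 2 * J).
  { unfold I0, J. rewrite RInt_sym by apply Kr_cont.
    rewrite (RInt_ext _ (fun t => 2 * Kr r t)). apply RInt_scal_R. apply ex_RInt_cont, Kr_cont.
    intros; rewrite Kr_even; fixeq; ring. }
  assert (HJpos : 0 < J). { assert (0 < (INR r + 1)^3) by (apply pow_lt; lra). lra. }
  destruct (Kr_span r) as [c Hc].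
  set (Ic k := RInt (fun s => g s * cos (INR k * s)) (-PI) PI).
  exists (fun th => sum_f_R0 (fun k => (c k * Ic k / I0) * cs k th) (4 * r)).
  split. { exists (fun k => c k * Ic k / I0). intros; auto. }
  intros th.
  assert (Hrep : sum_f_R0 (fun k => (c k * Ic k / I0) * cs k th) (4 * r) =
                 / I0 * RInt (fun s => g s * Kr r (s - th)) (-PI) PI).
  { rewrite (RInt_ext _ (fun s => sum_f_R0 (fun k => c k * cos (INR k * th) * (g s * cos (INR k * s)) +
                                                   c k * sin (INR k * th) * (g s * sin (INR k * s))) (4 * r))).
    2: { intros x _. rewrite Hc. rewrite scal_sum. apply sum_eq. intros i _. unfold cs.
         replace (INR i * (x - th)) with (INR i * x - INR i * th) by ring. rewrite cos_minus. ring. }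
    rewrite RInt_sum_R.
    2: { intros k x. apply cont_add; apply cont_mul; try apply continuous_const;
         apply cont_mul; auto; apply cont_of_der; auto_derive; auto. }
    rewrite scal_sum. apply sum_eq. intros i _.
    rewrite RInt_plus_R.
    2,3: apply ex_RInt_cont; intros; apply cont_mul; try apply continuous_const;
         apply cont_mul; auto; apply cont_of_der; auto_derive; auto.
    rewrite !RInt_scal_R.
    2,3: apply ex_RInt_cont; intros; apply cont_mul; auto; apply cont_of_der; auto_derive; auto.
    assert (Hodd : RInt (fun s => g s * sin (INR i * s)) (-PI) PI = 0).
    { rewrite RInt_sym. rewrite (RInt_ext _ (fun _ => 0)). rewrite RInt_const. unfold scal; simpl; unfold mult; simpl. ring.
      intros x _. rewrite Hge. replace (INR i * - x) with (- (INR i * x)) by ring. rewrite sin_neg. fixeq; ring.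
      intros; apply cont_mul; auto; apply cont_of_der; auto_derive; auto. }
    rewrite Hodd. unfold Ic, cs. field. lra. }
  rewrite Hrep.
  assert (Hsh : RInt (fun s => g s * Kr r (s - th)) (-PI) PI = RInt (fun t => g (th + t) * Kr r t) (-PI) PI).
  { pose proof (RInt_lin_R (fun s => g s * Kr r (s - th)) 1 th (-PI - th) (PI - th)).
    replace (1 * (-PI - th) + th) with (-PI) in H by ring. replace (1 * (PI - th) + th) with PI in H by ring.
    rewrite <- H. 2: { apply ex_RInt_cont. intros; apply cont_mul; auto.
      apply continuous_ext with (fun t => Kr r (1 * t + - th)). intros; f_equal; ring. apply (cont_aff (Kr r) 1 (-th)). apply Kr_cont. }
    rewrite <- (RInt_periodic _ (-PI - th)).
    replace (-PI - th + 2 * PI) with (PI - th) by ring.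
    apply RInt_ext. intros. rewrite Rmult_1_l. f_equal. f_equal; ring. f_equal; ring.
    intros; apply cont_mul. apply (continuous_ext (fun t => g (1 * t + th))). intros; f_equal; ring.
    apply cont_aff; auto. apply Kr_cont.
    intros x. replace (th + (x + 2 * PI)) with ((th + x) + 2 * PI) by ring. rewrite Hgp, Kr_per. auto. }
  rewrite Hsh.
  assert (HgI : g th = / I0 * RInt (fun t => g th * Kr r t) (-PI) PI).
  { rewrite RInt_scal_R. fold I0. field. lra. apply ex_RInt_cont, Kr_cont. }
  assert (Hcg : forall t, continuous (fun t => g (th + t) * Kr r t) t).
  { intros; apply cont_mul. apply (continuous_ext (fun t => g (1 * t + th))). intros; f_equal; ring.
    apply cont_aff; auto. apply Kr_cont. }
  assert (Hcg0 : forall t, continuous (fun t => g th * Kr r t) t).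
  { intros; apply cont_mul. apply continuous_const. apply Kr_cont. }
  rewrite HgI at 1. rewrite <- Rmult_minus_distr_l. rewrite <- RInt_minus_R by (apply ex_RInt_cont; auto).
  rewrite RInt_sym.
  2: { intros; apply (continuous_minus (fun t => g th * Kr r t) (fun t => g (th + t) * Kr r t)); auto. }
  set (m := Rpower (INR r + 1) (- beta)).
  assert (Hm : 0 < m) by (unfold m, Rpower; apply exp_pos).
  assert (Hcont2 : forall t, continuous (fun t => (g th * Kr r t - g (th + t) * Kr r t) + (g th * Kr r (-t) - g (th + - t) * Kr r (-t))) t).
  { intros t. apply cont_add. apply (continuous_minus (fun t => g th * Kr r t) (fun t => g (th + t) * Kr r t)); auto.
    apply (continuous_minus (fun t => g th * Kr r (-t)) (fun t => g (th + - t) * Kr r (-t))).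
    apply (continuous_ext (fun t => g th * Kr r (-1 * t + 0))). intros; f_equal; f_equal; ring.
    apply cont_mul. apply continuous_const. apply cont_aff, Kr_cont.
    apply (cont_neg (fun t => g (th + t) * Kr r t)); auto. }
  assert (Hbnd : Rabs (RInt (fun t => (g th * Kr r t - g (th + t) * Kr r t) + (g th * Kr r (-t) - g (th + - t) * Kr r (-t))) 0 PI)
           <= A * m * (J + (INR r + 1)^2 * RInt (fun t => t^2 * Kr r t) 0 PI)).
  { eapply Rle_trans. apply abs_RInt_le. lra. apply ex_RInt_cont; auto.
    assert (Hcp : forall t, continuous (fun t => A * m * (Kr r t + (INR r + 1)^2 * (t^2 * Kr r t))) t).
    { intros. apply cont_mul. apply continuous_const. apply cont_add. apply Kr_cont.
      apply cont_mul. apply continuous_const. apply cont_mul. apply cont_of_der; auto_derive; auto. apply Kr_cont. }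
    eapply Rle_trans. apply RInt_le with (g := fun t => A * m * (Kr r t + (INR r + 1)^2 * (t^2 * Kr r t))). lra.
    apply ex_RInt_cont. intros; apply (continuous_comp _ Rabs); auto. apply continuous_Rabs.
    apply ex_RInt_cont; auto.
    - intros t Ht. rewrite Kr_even.
      replace (g th * Kr r t - g (th + t) * Kr r t + (g th * Kr r t - g (th + - t) * Kr r t))
        with (- ((g (th + t) + g (th - t) - 2 * g th) * Kr r t)) by (unfold Rminus; ring).
      rewrite Rabs_Ropp, Rabs_mult, (Rabs_right (Kr r t)) by (apply Rle_ge, Kr_nonneg).
      pose proof (Kr_nonneg r t).
      eapply Rle_trans. apply Rmult_le_compat_r. auto. apply Hd2; lra.
      pose proof (rp_split t (INR r + 1) beta ltac:(lra) ltac:(lra) Hb). fold m in H0.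
      replace (A * m * (Kr r t + (INR r + 1)^2 * (t^2 * Kr r t))) with (A * (m * (1 + ((INR r + 1) * t)^2)) * Kr r t) by ring.
      apply Rmult_le_compat_r; auto. apply Rmult_le_compat_l; auto.
    - rewrite RInt_scal_R. rewrite RInt_plus_R. rewrite RInt_scal_R. fold J. right; ring.
      apply ex_RInt_cont. intros; apply cont_mul. apply cont_of_der; auto_derive; auto. apply Kr_cont.
      apply ex_RInt_cont; apply Kr_cont.
      apply ex_RInt_cont. intros; apply cont_mul. apply continuous_const. apply cont_mul. apply cont_of_der; auto_derive; auto. apply Kr_cont.
      apply ex_RInt_cont. intros. apply cont_add. apply Kr_cont. apply cont_mul. apply continuous_const. apply cont_mul. apply cont_of_der; auto_derive; auto. apply Kr_cont. }
  pose proof (M2_upper r) as HM2.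
  rewrite Rabs_mult. rewrite Rabs_right by (apply Rle_ge; left; apply Rinv_0_lt_compat; lra).
  rewrite HI0.
  apply Rmult_le_reg_l with (2 * J). lra.
  rewrite <- Rmult_assoc, Rinv_r, Rmult_1_l by lra.
  eapply Rle_trans. apply Hbnd.
  assert ((INR r + 1)^2 * RInt (fun t => t^2 * Kr r t) 0 PI <= 8400 * J).
  { eapply Rle_trans. apply Rmult_le_compat_l. nra. apply HM2. nra. }
  assert (0 <= A * m) by nra.
  apply Rle_trans with (A * m * (J + 8400 * J)). apply Rmult_le_compat_l; lra.
  nra.
Qed.

Lemma mvt_open (F dF : R -> R) a b : a < b ->
  (forall x, a <= x <= b -> continuity_pt F x) ->
  (forall x, a < x < b -> is_derive F x (dF x)) ->
  exists c, a < c < b /\ F b - F a = dF c * (b - a).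
Proof.
  intros Hab Hc Hd.
  assert (pr2 : forall c, a < c < b -> derivable_pt F c).
  { intros c P. exists (dF c). apply is_derive_Reals. apply Hd; auto. }
  assert (pr1 : forall c, a < c < b -> derivable_pt id c).
  { intros c P. apply derivable_pt_id. }
  destruct (MVT id F a b pr1 pr2 Hab) as [c [P E]].
  - intros; apply derivable_continuous_pt, derivable_pt_id.
  - auto.
  - exists c. split; auto.
    assert (E1 : derive_pt id c (pr1 c P) = 1).
    { apply derive_pt_eq_0. apply derivable_pt_lim_id. }
    assert (E2 : derive_pt F c (pr2 c P) = dF c).
    { apply derive_pt_eq_0. apply is_derive_Reals. apply Hd; auto. }
    rewrite E1, E2 in E. unfold id in E. lra.
Qed.

Lemma compare (f h df dh : R -> R) a b : a <= b ->
  (forall x, a <= x <= b -> continuity_pt f x) -> (forall x, a <= x <= b -> continuity_pt h x) ->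
  (forall x, a < x < b -> is_derive f x (df x)) -> (forall x, a < x < b -> is_derive h x (dh x)) ->
  (forall x, a < x < b -> Rabs (df x) <= dh x) -> Rabs (f b - f a) <= h b - h a.
Proof.
  intros Hab Cf Ch Df Dh Hb. destruct (Req_dec a b) as [<-|Hne].
  { rewrite !Rminus_eq_0, Rabs_R0. lra. }
  assert (a < b) by lra.
  destruct (mvt_open (fun x => h x - f x) (fun x => dh x - df x) a b H) as [c1 [Hc1 E1]].
  { intros; apply continuity_pt_minus; auto. }
  { intros. apply (is_derive_minus h f); auto. }
  destruct (mvt_open (fun x => h x + f x) (fun x => dh x + df x) a b H) as [c2 [Hc2 E2]].
  { intros; apply continuity_pt_plus; auto. }
  { intros. apply (is_derive_plus h f); auto. }
  pose proof (Hb c1 Hc1). pose proof (Hb c2 Hc2).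
  pose proof (Rle_abs (df c1)) as A1. pose proof (Rle_abs (- df c1)) as A2. rewrite Rabs_Ropp in A2.
  pose proof (Rle_abs (df c2)) as A3. pose proof (Rle_abs (- df c2)) as A4. rewrite Rabs_Ropp in A4.
  assert (0 <= (dh c2 + df c2) * (b - a)) by (apply Rmult_le_pos; lra).
  assert (0 <= (dh c1 - df c1) * (b - a)) by (apply Rmult_le_pos; lra).
  apply Rabs_le. lra.
Qed.

Lemma locally_R x (P : R -> Prop) (d : R) : 0 < d -> (forall y, Rabs (y - x) < d -> P y) -> locally x P.
Proof. intros Hd H. exists (mkposreal d Hd). intros y Hy. apply H. exact Hy. Qed.

Lemma rp_pos x y : 0 < Rpower x y.
Proof. unfold Rpower; apply exp_pos. Qed.

Lemma rp_one e : Rpower 1 e = 1.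
Proof. unfold Rpower. rewrite ln_1, Rmult_0_r, exp_0. auto. Qed.

Lemma rp_mono_pos a b e : 0 < a <= b -> 0 <= e -> Rpower a e <= Rpower b e.
Proof. intros; apply Rle_Rpower_l; auto. Qed.

Lemma rp_mono_neg a b e : 0 < a <= b -> e <= 0 -> Rpower b e <= Rpower a e.
Proof.
  intros Hab He. replace e with (- (- e)) by ring. rewrite (Rpower_Ropp b (-e)), (Rpower_Ropp a (-e)).
  apply Rinv_le_contravar. apply rp_pos. apply Rle_Rpower_l; lra.
Qed.

Lemma rp_mul a b e : 0 < a -> 0 < b -> Rpower (a * b) e = Rpower a e * Rpower b e.
Proof. intros. rewrite Rpower_mult_distr; auto. Qed.

Lemma rp_sq t : 0 < t -> Rpower t 2 = t^2.
Proof. intros. replace 2 with (INR 2) by (simpl; ring). apply Rpower_pow; auto. Qed.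

Lemma rp_t2 t a : 0 < t -> Rpower (t^2) a = Rpower t (2 * a).
Proof. intros. rewrite <- rp_sq by auto. rewrite Rpower_mult. auto. Qed.

Lemma rp_1 t : 0 < t -> Rpower t 1 = t.
Proof. apply Rpower_1. Qed.

Lemma rp_deriv e x : x < 1 -> is_derive (fun s => Rpower (1 - s) e) x (- (e * Rpower (1 - x) (e - 1))).
Proof.
  intros Hx.
  replace (- (e * Rpower (1 - x) (e - 1))) with (scal (-1) (e * Rpower (1 - x) (e - 1)))
    by (unfold scal; simpl; unfold mult; simpl; ring).
  apply (is_derive_comp (fun y => Rpower y e) (fun s => 1 - s)).
  - apply is_derive_Reals. apply derivable_pt_lim_power. lra.
  - auto_derive; auto; ring.
Qed.

Lemma rp_subadd q d a : 0 < q -> 0 < d -> 0 < a < 1 -> Rpower (q + d) a <= Rpower q a + Rpower d a.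
Proof.
  intros Hq Hd Ha.
  assert (E : forall x, 0 < x -> Rpower x a = x * Rpower x (a - 1)).
  { intros x Hx. replace a with (1 + (a - 1)) at 1 by ring. rewrite Rpower_plus, rp_1; auto. }
  rewrite (E (q + d)), (E q), (E d) by lra.
  assert (Rpower (q + d) (a - 1) <= Rpower q (a - 1)) by (apply rp_mono_neg; lra).
  assert (Rpower (q + d) (a - 1) <= Rpower d (a - 1)) by (apply rp_mono_neg; lra).
  nra.
Qed.

Definition pw (a x : R) := if Rlt_dec 0 x then Rpower x a else 0.

Lemma pw_cont0 a : 0 < a -> continuity_pt (pw a) 0.
Proof.
  intros Ha. apply continuity_pt_filterlim. apply filterlim_locally. intros eps.
  apply locally_R with (Rpower eps (/ a)). apply rp_pos.
  intros y Hy. change (Rabs (pw a y - pw a 0) < eps).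
  unfold pw at 2. destruct (Rlt_dec 0 0); [lra|]. rewrite Rminus_0_r.
  unfold pw. destruct (Rlt_dec 0 y).
  - rewrite Rabs_right by (left; apply rp_pos). rewrite Rminus_0_r, Rabs_right in Hy by lra.
    apply Rlt_le_trans with (Rpower (Rpower eps (/ a)) a).
    apply Rlt_Rpower_l; auto. rewrite Rpower_mult, Rinv_l, rp_1 by (try lra; apply cond_pos). lra.
  - rewrite Rabs_R0. apply cond_pos.
Qed.

Lemma pw_1m_cont a s : 0 < a -> s <= 1 -> continuity_pt (fun s => pw a (1 - s)) s.
Proof.
  intros Ha Hs. destruct (Req_dec s 1) as [->|Hne].
  - apply (continuity_pt_comp (fun s => 1 - s) (pw a)).
    apply continuity_pt_minus. apply continuity_pt_const. intros ??; auto. apply continuity_pt_id.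
    replace (1 - 1) with 0 by ring. apply pw_cont0; auto.
  - apply continuity_pt_filterlim. apply (ex_derive_continuous (K := R_AbsRing) (V := R_NormedModule) (fun s => pw a (1 - s))).
    exists (- (a * Rpower (1 - s) (a - 1))).
    apply (is_derive_ext_loc (fun s => Rpower (1 - s) a)). 2: apply rp_deriv; lra.
    apply locally_R with (1 - s). lra. intros y Hy. unfold pw. destruct (Rlt_dec 0 (1 - y)); auto.
    exfalso. apply n. apply Rabs_lt_between in Hy. lra.
Qed.

Lemma holder (H H1 : R -> R) a K : 0 < a < 1 -> 0 <= K -> (forall y, continuous H y) ->
  (forall y, -1 < y < 1 -> is_derive H y (H1 y)) ->
  (forall y, -1 < y < 1 -> Rabs (H1 y) <= K * Rpower (1 - y) (a - 1)) ->
  forall x y, -1 <= x -> x < y -> y <= 1 -> Rabs (H y - H x) <= K / a * Rpower (y - x) a.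
Proof.
  intros Ha HK Hc HD HB x y Hx Hxy Hy.
  eapply Rle_trans.
  apply (compare H (fun s => - (K / a) * pw a (1 - s)) H1 (fun s => K * Rpower (1 - s) (a - 1)) x y).
  - lra.
  - intros; apply continuity_pt_filterlim; apply Hc.
  - intros s Hs. apply continuity_pt_scal. apply pw_1m_cont; lra.
  - intros s Hs. apply HD; lra.
  - intros s Hs. apply (is_derive_ext_loc (fun s => - (K / a) * Rpower (1 - s) a)).
    apply locally_R with (1 - s). lra. intros z Hz. unfold pw. destruct (Rlt_dec 0 (1 - z)); auto.
    exfalso. apply n. apply Rabs_lt_between in Hz. lra.
    replace (K * Rpower (1 - s) (a - 1)) with (- (K / a) * (- (a * Rpower (1 - s) (a - 1)))) by (field; lra).
    apply (is_derive_scal (fun s => Rpower (1 - s) a)). apply rp_deriv; lra.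
  - intros s Hs; apply HB; lra.
  - unfold pw. destruct (Rlt_dec 0 (1 - x)); [|lra].
    destruct (Rlt_dec 0 (1 - y)).
    + assert (Rpower (1 - x) a <= Rpower (1 - y) a + Rpower (y - x) a).
      { replace (1 - x) with ((1 - y) + (y - x)) by ring. apply rp_subadd; lra. }
      assert (0 <= K / a) by (apply Rdiv_le_0_compat; lra). nra.
    + replace (y - x) with (1 - x) by lra. lra.
Qed.

Lemma second_order (H H1 H2 : R -> R) u v B : (forall y, continuous H y) ->
  (forall y, -1 < y < 1 -> is_derive H y (H1 y)) -> (forall y, -1 < y < 1 -> is_derive H1 y (H2 y)) ->
  0 < v -> -1 <= u - v -> u + v < 1 -> (forall s, u - v < s < u + v -> Rabs (H2 s) <= B) ->
  Rabs (H (u + v) + H (u - v) - 2 * H u) <= B * v^2.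
Proof.
  intros Hc HD1 HD2 Hv Hl Hr HB.
  pose proof (compare (fun s => H (u + s) + H (u - s) - 2 * H u) (fun s => B * s^2)
     (fun s => H1 (u + s) - H1 (u - s)) (fun s => 2 * B * s) 0 v) as C.
  assert (E0 : H (u + 0) + H (u - 0) - 2 * H u = 0) by (rewrite Rplus_0_r, Rminus_0_r; ring).
  replace (B * v^2) with (B * v^2 - B * 0^2) by ring.
  replace (H (u + v) + H (u - v) - 2 * H u) with (H (u + v) + H (u - v) - 2 * H u - (H (u + 0) + H (u - 0) - 2 * H u)) by (rewrite E0; ring).
  apply C; clear C.
  - lra.
  - intros s Hs. apply continuity_pt_filterlim.
    apply (continuous_minus (fun s => H (u + s) + H (u - s)) (fun _ => 2 * H u)).
    apply (continuous_plus (fun s => H (u + s)) (fun s => H (u - s))).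
    apply (continuous_comp (fun s => u + s) H). apply cont_of_der; auto_derive; auto. apply Hc.
    apply (continuous_comp (fun s => u - s) H). apply cont_of_der; auto_derive; auto. apply Hc.
    apply continuous_const.
  - intros. apply continuity_pt_filterlim. apply (cont_of_der (fun s => B * s^2)); auto_derive; auto.
  - intros s Hs. 
    replace (H1 (u + s) - H1 (u - s)) with (minus (plus (scal 1 (H1 (u + s))) (scal (-1) (H1 (u - s)))) (@zero R_AbsRing))
      by (unfold minus, plus, scal, opp, zero; simpl; unfold mult; simpl; ring).
    apply (is_derive_minus (fun s => H (u + s) + H (u - s)) (fun _ => 2 * H u)).
    apply (is_derive_plus (fun s => H (u + s)) (fun s => H (u - s))).
    apply (is_derive_comp H (fun s => u + s)). apply HD1; lra.
    auto_derive; auto; ring.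
    apply (is_derive_comp H (fun s => u - s)). apply HD1; lra.
    auto_derive; auto; ring.
    auto_derive; auto.
  - intros s Hs. auto_derive; auto; ring.
  - intros s Hs.
    pose proof (compare H1 (fun x => B * x) H2 (fun _ => B) (u - s) (u + s)) as C.
    replace (2 * B * s) with (B * (u + s) - B * (u - s)) by ring. apply C; clear C.
    + lra.
    + intros x Hx. apply continuity_pt_filterlim. apply (ex_derive_continuous (K := R_AbsRing) (V := R_NormedModule) H1).
      exists (H2 x). apply HD2; lra.
    + intros. apply continuity_pt_filterlim. apply (cont_of_der (fun x => B * x)); auto_derive; auto.
    + intros x Hx. apply HD2; lra.
    + intros x Hx. auto_derive; auto; ring.
    + intros x Hx. apply HB; lra.
Qed.

Lemma deriv_bound (H1 H2 : R -> R) a M : 0 < a < 1 -> 0 <= M ->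
  (forall y, -1 < y < 1 -> is_derive H1 y (H2 y)) ->
  (forall y, -1 < y < 1 -> Rabs (H2 y) <= M * Rpower (1 - y) (a - 2)) ->
  H1 0 = 0 ->
  forall y, -1 < y < 1 -> Rabs (H1 y) <= M * (2 + / (1 - a)) * Rpower (1 - y) (a - 1).
Proof.
  intros Ha HM HD HB H10 y Hy.
  assert (Hp : 0 < Rpower (1 - y) (a - 1)) by apply rp_pos.
  assert (Hi : 0 < / (1 - a)) by (apply Rinv_0_lt_compat; lra).
  destruct (Rle_dec 0 y).
  - pose proof (compare H1 (fun s => M / (1 - a) * Rpower (1 - s) (a - 1)) H2
                  (fun s => M * Rpower (1 - s) (a - 2)) 0 y) as C.
    rewrite H10, Rminus_0_r, Rminus_0_r in C. rewrite rp_one in C.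
    assert (Rabs (H1 y) <= M / (1 - a) * Rpower (1 - y) (a - 1) - M / (1 - a) * 1).
    { apply C; clear C.
      - lra.
      - intros x Hx. apply continuity_pt_filterlim.
        apply (ex_derive_continuous (K := R_AbsRing) (V := R_NormedModule) H1). exists (H2 x). apply HD; lra.
      - intros x Hx. apply continuity_pt_filterlim.
        apply (ex_derive_continuous (K := R_AbsRing) (V := R_NormedModule) (fun s => M / (1 - a) * Rpower (1 - s) (a - 1))).
        exists (M / (1 - a) * (- ((a - 1) * Rpower (1 - x) (a - 1 - 1)))).
        apply (is_derive_scal (fun s => Rpower (1 - s) (a - 1))). apply rp_deriv; lra.
      - intros x Hx. apply HD; lra.
      - intros x Hx. replace (M * Rpower (1 - x) (a - 2)) with (M / (1 - a) * (- ((a - 1) * Rpower (1 - x) (a - 1 - 1)))).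
        apply (is_derive_scal (fun s => Rpower (1 - s) (a - 1))). apply rp_deriv; lra.
        replace (a - 1 - 1) with (a - 2) by ring. field. lra.
      - intros x Hx. apply HB; lra. }
    assert (0 <= M / (1 - a)) by (apply Rdiv_le_0_compat; lra).
    assert (M / (1 - a) * Rpower (1 - y) (a - 1) <= M * (2 + / (1 - a)) * Rpower (1 - y) (a - 1)).
    { apply Rmult_le_compat_r. lra. unfold Rdiv. nra. }
    lra.
  - pose proof (compare H1 (fun s => M * s) H2 (fun _ => M) y 0) as C.
    rewrite H10, Rmult_0_r in C.
    assert (Rabs (0 - H1 y) <= 0 - M * y).
    { apply C; clear C.
      - lra.
      - intros x Hx. apply continuity_pt_filterlim.
        apply (ex_derive_continuous (K := R_AbsRing) (V := R_NormedModule) H1). exists (H2 x). apply HD; lra.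
      - intros x Hx. apply continuity_pt_filterlim. apply (cont_of_der (fun s => M * s)). auto_derive; auto.
      - intros x Hx. apply HD; lra.
      - intros x Hx. auto_derive; auto; ring.
      - intros x Hx. eapply Rle_trans. apply HB; lra.
        assert (Rpower (1 - x) (a - 2) <= Rpower 1 (a - 2)) by (apply rp_mono_neg; lra).
        rewrite rp_one in H. nra. }
    rewrite Rminus_0_l, Rabs_Ropp in H.
    assert (1/2 <= Rpower (1 - y) (a - 1)).
    { assert (A0 : Rpower 2 (a - 1) <= Rpower (1 - y) (a - 1)) by (apply rp_mono_neg; lra).
      assert (A1 : Rpower 2 (1 - a) <= Rpower 2 1) by (apply Rle_Rpower; lra).
      rewrite rp_1 in A1 by lra.
      replace (a - 1) with (- (1 - a)) in A0 at 1 by ring. rewrite Rpower_Ropp in A0.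
      assert (/ 2 <= / Rpower 2 (1 - a)) by (apply Rinv_le_contravar; [apply rp_pos | lra]).
      lra. }
    assert (M * 1 <= M * (2 + / (1 - a)) * Rpower (1 - y) (a - 1)).
    { apply Rle_trans with (M * (2 * Rpower (1 - y) (a - 1))). apply Rmult_le_compat_l; lra.
      rewrite Rmult_assoc. apply Rmult_le_compat_l. lra. nra. }
    nra.
Qed.

Lemma holder2 (H : R -> R) K1 a : 
  (forall x y, -1 <= x -> x < y -> y <= 1 -> Rabs (H y - H x) <= K1 * Rpower (y - x) a) ->
  forall x y, -1 <= x <= 1 -> -1 <= y <= 1 -> x <> y -> Rabs (H x - H y) <= K1 * Rpower (Rabs (x - y)) a.
Proof.
  intros Hh x y Hx Hy Hne. destruct (Rlt_dec x y).
  - rewrite Rabs_minus_sym, (Rabs_minus_sym x y). rewrite (Rabs_right (y - x)) by lra. apply Hh; lra.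
  - rewrite (Rabs_right (x - y)) by lra. apply Hh; lra.
Qed.

Lemma sd_bound (H H1 H2 : R -> R) a M K1 : 0 < a < 1 -> 0 <= M -> 0 <= K1 ->
  (forall y, continuous H y) ->
  (forall y, -1 < y < 1 -> is_derive H y (H1 y)) -> (forall y, -1 < y < 1 -> is_derive H1 y (H2 y)) ->
  (forall y, -1 < y < 1 -> Rabs (H2 y) <= M * Rpower (1 - y) (a - 2)) ->
  (forall x y, -1 <= x -> x < y -> y <= 1 -> Rabs (H y - H x) <= K1 * Rpower (y - x) a) ->
  forall th t, 0 < t -> Rabs (H (cos (th + t)) + H (cos (th - t)) - 2 * H (cos th)) <= (8 * M + 10 * K1) * Rpower t (2 * a).
Proof.
  intros Ha HM HK Hc HD1 HD2 HB Hh th t Ht.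
  pose proof (holder2 H K1 a Hh) as Hh2.
  set (P := Rpower t (2 * a)).
  assert (HP : P = Rpower (t^2) a) by (unfold P; rewrite rp_t2; auto).
  assert (HP0 : 0 < P) by apply rp_pos.
  set (c0 := cos th). set (u := cos th * cos t). set (w := sin th * sin t).
  assert (Ep : cos (th + t) = u - w) by (unfold u, w; rewrite cos_plus; ring).
  assert (Em : cos (th - t) = u + w) by (unfold u, w; rewrite cos_minus; ring).
  pose proof (COS_bound (th + t)). pose proof (COS_bound (th - t)).
  pose proof (COS_bound th) as Hc0. pose proof (COS_bound t) as Hct.
  pose proof (sin_abs_le t) as Hst. rewrite (Rabs_right t) in Hst by lra.
  pose proof (cos_lb2 t) as Hcl.
  pose proof (sin2 th) as Hs2. 
  set (v := Rabs w).
  assert (Hv0 : 0 <= v) by apply Rabs_pos.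
  assert (E1 : H (u - w) + H (u + w) = H (u + v) + H (u - v)).
  { unfold v. destruct (Rle_dec 0 w). rewrite Rabs_right by lra. ring. rewrite Rabs_left by lra.
    replace (u - - w) with (u + w) by ring. replace (u + - w) with (u - w) by ring. ring. }
  assert (Huv : -1 <= u - v /\ u + v <= 1).
  { unfold v. destruct (Rle_dec 0 w). rewrite Rabs_right by lra. lra. rewrite Rabs_left by lra. lra. }
  set (rho := 1 - u).
  assert (Hsc : sin th ^ 2 + c0 ^ 2 = 1) by (pose proof (sin2_cos2 th) as E; unfold Rsqr in E; unfold c0; lra).
  assert (Habs : Rabs u <= Rabs c0).
  { unfold u. rewrite Rabs_mult. pose proof (Rabs_pos (cos th)).
    assert (Rabs (cos t) <= 1) by (apply Rabs_le; lra). unfold c0. nra. }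
  assert (Hu1 : -1 <= u <= 1).
  { assert (Rabs c0 <= 1) by (apply Rabs_le; unfold c0; lra). pose proof (Rle_abs u) as B1.
    pose proof (Rle_abs (-u)) as B2. rewrite Rabs_Ropp in B2. lra. }
  assert (Hs : sin th ^ 2 <= 2 * rho).
  { pose proof (Rle_abs u). unfold rho.
    assert (-1 <= c0 <= 1) by (unfold c0; lra).
    assert (1 - c0^2 <= 2 * (1 - Rabs c0)).
    { destruct (Rle_dec 0 c0). rewrite Rabs_right by lra. nra. rewrite Rabs_left by lra. nra. }
    lra. }
  assert (Hvr : v^2 <= 2 * rho * t^2).
  { assert (Ev : v^2 = sin th ^ 2 * sin t ^ 2).
    { unfold v. rewrite RPow_abs. rewrite Rabs_right. unfold w; ring. apply Rle_ge, pow2_ge_0. }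
    rewrite Ev. assert (sin t ^ 2 <= t^2).
    { rewrite <- (Rabs_right (sin t ^ 2)) by (apply Rle_ge, pow2_ge_0). rewrite <- RPow_abs. pose proof (Rabs_pos (sin t)). nra. }
    assert (0 <= sin th ^ 2) by apply pow2_ge_0. assert (0 <= sin t ^ 2) by apply pow2_ge_0.
    assert (sin th ^ 2 * sin t ^ 2 <= 2 * rho * sin t ^2) by nra. nra. }
  assert (Hrho : 0 <= rho) by (unfold rho; pose proof (Rle_abs u); assert (Rabs c0 <= 1) by (apply Rabs_le; unfold c0; lra); lra).
  assert (HT2 : Rabs (H u - H c0) <= K1 * P).
  { destruct (Req_dec u c0) as [->|Hne].
    - rewrite Rminus_eq_0, Rabs_R0. nra.
    - eapply Rle_trans. apply Hh2; [lra | unfold c0; lra | auto].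
      rewrite HP. apply Rmult_le_compat_l; auto. apply rp_mono_pos; [|lra]. split.
      apply Rabs_pos_lt. lra.
      replace (u - c0) with (c0 * (cos t - 1)) by (unfold u, c0; ring). rewrite Rabs_mult.
      assert (Rabs c0 <= 1) by (apply Rabs_le; unfold c0; lra).
      rewrite (Rabs_left1 (cos t - 1)) by lra. pose proof (Rabs_pos c0). nra. }
  assert (HT1 : Rabs (H (u + v) + H (u - v) - 2 * H u) <= (4 * M + 8 * K1) * P).
  { destruct (Req_dec v 0) as [Hv|Hv].
    - rewrite Hv, Rplus_0_r, Rminus_0_r. replace (H u + H u - 2 * H u) with 0 by ring. rewrite Rabs_R0. nra.
    - assert (Hvp : 0 < v) by lra.
      destruct (Rle_dec (2 * v) rho).
      + set (q := rho / 2). assert (Hq : 0 < q) by (unfold q; lra).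
        eapply Rle_trans. apply (second_order H H1 H2 u v (M * Rpower q (a - 2))); auto; try lra.
        { unfold q, rho in *. lra. }
        { intros s Hs0. eapply Rle_trans. apply HB. unfold q, rho in *; lra.
          apply Rmult_le_compat_l; auto. apply rp_mono_neg; [|lra]. unfold q, rho in *; lra. }
        assert (Eq2 : forall e, Rpower q (e - 2) * q^2 = Rpower q e).
        { intros e. rewrite <- rp_sq by auto. rewrite <- Rpower_plus. f_equal; ring. }
        assert (Eq1 : forall e, Rpower q (e - 1) * q = Rpower q e).
        { intros e. rewrite <- (rp_1 q) at 2 by auto. rewrite <- Rpower_plus. f_equal; ring. }
        assert (Hpq : 0 < Rpower q (a - 2)) by apply rp_pos.
        destruct (Rle_dec q (t^2)).
        * assert (v^2 <= q^2) by (unfold q; nra).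
          apply Rle_trans with (M * Rpower q a). rewrite <- (Eq2 a). rewrite Rmult_assoc. apply Rmult_le_compat_l; auto.
          apply Rmult_le_compat_l; lra.
          rewrite HP. assert (Rpower q a <= Rpower (t^2) a) by (apply rp_mono_pos; lra).
          assert (0 <= K1 * Rpower (t^2) a) by (pose proof (rp_pos (t^2) a); nra). nra.
        * assert (v^2 <= 4 * q * t^2) by (unfold q; lra).
          assert (Ht2 : 0 < t^2) by nra.
          assert (Rpower q (a - 1) <= Rpower (t^2) (a - 1)) by (apply rp_mono_neg; lra).
          assert (Eqt : Rpower (t^2) (a - 1) * t^2 = Rpower (t^2) a).
          { rewrite <- (rp_1 (t^2)) at 2 by auto. rewrite <- Rpower_plus. f_equal; ring. }
          apply Rle_trans with (M * (4 * Rpower (t^2) a)).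
          { rewrite Rmult_assoc. apply Rmult_le_compat_l; auto.
            apply Rle_trans with (Rpower q (a - 2) * (4 * q * t^2)). apply Rmult_le_compat_l; lra.
            replace (Rpower q (a - 2) * (4 * q * t^2)) with (4 * ((Rpower q (a - 2) * q) * t^2)) by ring.
            replace (Rpower q (a - 2) * q) with (Rpower q (a - 1)) by (rewrite <- (Eq1 (a - 1)); f_equal; f_equal; ring).
            rewrite <- Eqt. pose proof (rp_pos q (a - 1)). nra. }
          rewrite HP. assert (0 <= K1 * Rpower (t^2) a) by (pose proof (rp_pos (t^2) a); nra). nra.
      + assert (Hv4 : v < 4 * t^2).
        { assert (rho < 2 * v) by lra. nra. }
        assert (A1 : Rabs (H (u + v) - H u) <= K1 * Rpower v a).
        { replace v with (Rabs ((u + v) - u)) at 2 by (rewrite Rabs_right; lra).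
          apply Hh2; lra. }
        assert (A2 : Rabs (H (u - v) - H u) <= K1 * Rpower v a).
        { replace v with (Rabs ((u - v) - u)) at 2 by (rewrite Rabs_left; lra).
          apply Hh2; lra. }
        assert (A3 : Rpower v a <= 4 * P).
        { rewrite HP. apply Rle_trans with (Rpower (4 * t^2) a). apply rp_mono_pos; lra.
          rewrite rp_mul by nra. apply Rmult_le_compat_r. left; apply rp_pos.
          rewrite <- (rp_1 4) at 2 by lra. apply Rle_Rpower; lra. }
        replace (H (u + v) + H (u - v) - 2 * H u) with ((H (u + v) - H u) + (H (u - v) - H u)) by ring.
        eapply Rle_trans. apply Rabs_triang. nra. }
  rewrite Ep, Em. rewrite E1.
  replace (H (u + v) + H (u - v) - 2 * H c0) with ((H (u + v) + H (u - v) - 2 * H u) + 2 * (H u - H c0)) by ring.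
  eapply Rle_trans. apply Rabs_triang. rewrite Rabs_mult, (Rabs_right 2) by lra.
  nra.
Qed.

Lemma EL_le phi L lo hi a E : lo <= hi ->
  (forall x, lo <= x <= hi -> Rabs (phi x - poly_eval a L x) <= E) ->
  Rbar_le (E_L phi L lo hi) (Finite E).
Proof.
  intros Hlh HE.
  set (S := fun y => exists x, lo <= x <= hi /\ y = Rabs (phi x - poly_eval a L x)).
  destruct (Lub_Rbar_correct S) as [Hub Hl].
  assert (H1 : Rbar_le (Lub_Rbar S) (Finite E)).
  { apply Hl. intros y [x [Hx ->]]. simpl. apply HE; auto. }
  assert (H2 : Rbar_le (Finite (Rabs (phi lo - poly_eval a L lo))) (Lub_Rbar S)).
  { apply Hub. exists lo. split; auto; lra. }
  assert (Hs : sup_err phi a L lo hi = Lub_Rbar S) by reflexivity.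
  destruct (Lub_Rbar S) as [e| |] eqn:Ee; simpl in H1, H2; try contradiction.
  destruct (Glb_Rbar_correct (fun e : R => exists a : nat -> R, sup_err phi a L lo hi = Finite e)) as [Hlb _].
  unfold E_L. apply Rbar_le_trans with (Finite e).
  - apply Hlb. exists a. rewrite Hs. auto.
  - simpl. auto.
Qed.

Definition clamp (x : R) := (Rabs x - Rabs (x - 1) + 1) / 2.

Lemma clamp_in x : 0 <= clamp x <= 1.
Proof. unfold clamp. unfold Rabs; destruct (Rcase_abs x), (Rcase_abs (x - 1)); lra. Qed.

Lemma clamp_id x : 0 <= x <= 1 -> clamp x = x.
Proof. intros. unfold clamp. rewrite Rabs_right by lra. rewrite Rabs_left1 by lra. field. Qed.

Lemma clamp_cont x : continuous clamp x.
Proof.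
  unfold clamp. apply (continuous_mult (fun x => Rabs x - Rabs (x - 1) + 1) (fun _ => / 2)).
  apply (continuous_plus (fun x => Rabs x - Rabs (x - 1)) (fun _ => 1)).
  apply (continuous_minus Rabs (fun x => Rabs (x - 1))). apply continuous_Rabs.
  apply (continuous_comp (fun x => x - 1) Rabs). apply cont_of_der; auto_derive; auto. apply continuous_Rabs.
  apply continuous_const. apply continuous_const.
Qed.

Lemma Phi_cont (phi : R -> R) :
  (forall x, 0 <= x <= 1 -> filterlim phi (within (fun y => 0 <= y <= 1) (locally x)) (locally (phi x))) ->
  forall x, continuous (fun x => phi (clamp x)) x.
Proof.
  intros Hc x. unfold continuous.
  apply (filterlim_comp _ _ _ clamp phi (locally x) (within (fun y => 0 <= y <= 1) (locally (clamp x)))).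
  - intros P HP. unfold within in HP. pose proof (clamp_cont x _ HP) as Q.
    unfold filtermap in *. simpl in Q. eapply filter_imp; [|exact Q]. intros z Hz. apply Hz. apply clamp_in.
  - apply Hc. apply clamp_in.
Qed.

Lemma sum_cos_poly (Dl : R) : Dl <> 0 -> forall (b : nat -> R) n,
  exists Q, span pe n Q /\ forall th, sum_f_R0 (fun k => b k * cs k th) n = Q (Dl * (1 - cos th) / 2).
Proof.
  intros HD b n. induction n.
  - exists (fun _ => b 0%nat). split. apply span_pe_const. intros; simpl. unfold cs. simpl. rewrite Rmult_0_l, cos_0. ring.
  - destruct IHn as [Q [HQ EQ]]. destruct (cheb_poly Dl HD (S n)) as [T [HT ET]].
    exists (fun x => Q x + b (S n) * T x). split.
    + apply span_add. apply span_mono with n; auto. apply span_scal; auto.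
    + intros th. simpl. rewrite EQ. unfold cs. rewrite ET. auto.
Qed.

Lemma rp_inv x e : 0 < x -> Rpower (/ x) e = / Rpower x e.
Proof. intros. unfold Rpower. rewrite ln_Rinv by auto. rewrite <- exp_Ropp. f_equal; ring. Qed.

Lemma final_ineq a D l m : 0 < a < 1 -> 0 < D -> 1 <= l -> 1 <= m -> l <= 4 * m ->
  Rpower D a * Rpower m (- (2 * a)) <= 16 * Rpower (D / l ^ 2) a.
Proof.
  intros Ha HD Hl Hm Hlm.
  unfold Rdiv. rewrite rp_mul by (try apply Rinv_0_lt_compat; nra).
  rewrite rp_inv by nra. rewrite rp_t2 by lra. rewrite Rpower_Ropp.
  assert (Rpower l (2 * a) <= 16 * Rpower m (2 * a)).
  { apply Rle_trans with (Rpower (4 * m) (2 * a)). apply rp_mono_pos; lra.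
    rewrite rp_mul by lra. apply Rmult_le_compat_r. left; apply rp_pos.
    apply Rle_trans with (Rpower 4 2). apply Rle_Rpower; lra. rewrite rp_sq by lra. lra. }
  pose proof (rp_pos l (2 * a)). pose proof (rp_pos m (2 * a)). pose proof (rp_pos D a).
  assert (/ Rpower m (2 * a) <= 16 * / Rpower l (2 * a)).
  { apply Rmult_le_reg_r with (Rpower m (2 * a) * Rpower l (2 * a)). nra.
    field_simplify; try lra. }
  nra.
Qed.

Theorem lemma8 (alpha : R) (phi d1 d2 : R -> R) (W c c' : R) :
  0 < alpha < 1 ->
  (forall x, 0 <= x <= 1 -> 0 <= phi x) ->
  (forall x, 0 <= x <= 1 ->
     filterlim phi (within (fun y => 0 <= y <= 1) (locally x)) (locally (phi x))) ->
  (forall p, 0 < p < 1 -> is_derive phi p (d1 p)) ->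
  (forall p, 0 < p < 1 -> is_derive d1 p (d2 p)) ->
  (forall p, 0 < p < 1 -> continuous d2 p) ->
  0 < W ->
  (forall p, 0 < p < 1 ->
     (2 - alpha) * W * Rpower p (alpha - 2) + c' <= Rabs (d2 p) <=
     (2 - alpha) * W * Rpower p (alpha - 2) + c) ->
  exists C : R, 0 < C /\
    forall (Delta : R) (L : nat), 0 < Delta <= 1 -> (1 <= L)%nat ->
      Rbar_le (E_L phi L 0 Delta)
              (Finite (C * Rpower (Delta / (INR L) ^ 2) alpha)).
Proof.
  intros Ha Hpos Hcont Hd1 Hd2 Hd2c HW Hb.
  set (A0 := (2 - alpha) * W + Rabs c).
  assert (HA0 : 0 < A0) by (unfold A0; pose proof (Rabs_pos c); nra).
  assert (Hd2b : forall p, 0 < p < 1 -> Rabs (d2 p) <= A0 * Rpower p (alpha - 2)).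
  { intros p Hp. destruct (Hb p Hp) as [_ Hup].
    assert (1 <= Rpower p (alpha - 2)) by (rewrite <- (rp_one (alpha - 2)); apply rp_mono_neg; lra).
    unfold A0. pose proof (Rle_abs c). pose proof (Rabs_pos c). nra. }
  set (kap := 8 + 10 * (2 + / (1 - alpha)) / alpha).
  assert (Hkap : 0 < kap).
  { unfold kap. assert (0 < / (1 - alpha)) by (apply Rinv_0_lt_compat; lra).
    assert (0 < (2 + / (1 - alpha)) / alpha) by (apply Rdiv_lt_0_compat; lra). lra. }
  exists (4201 * 16 * A0 * kap). split. nra.
  intros D L HD HL.
  set (M := A0 * Rpower D alpha).
  assert (HM : 0 < M) by (unfold M; pose proof (rp_pos D alpha); nra).
  set (Phi := fun x => phi (clamp x)).
  set (b0 := - (D / 2) * d1 (D / 2)).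
  set (H := fun y => Phi (D * (1 - y) / 2) - b0 * y).
  set (H1 := fun y => - (D / 2) * d1 (D * (1 - y) / 2) - b0).
  set (H2 := fun y => D * D / 4 * d2 (D * (1 - y) / 2)).
  assert (HPc : forall x, continuous Phi x) by (apply Phi_cont; auto).
  assert (HHc : forall y, continuous H y).
  { intros y. unfold H. apply (continuous_minus (fun y => Phi (D * (1 - y) / 2)) (fun y => b0 * y)).
    apply (continuous_comp (fun y => D * (1 - y) / 2) Phi). apply cont_of_der; auto_derive; auto. apply HPc.
    apply cont_of_der; auto_derive; auto. }
  assert (Hp01 : forall y, -1 < y < 1 -> 0 < D * (1 - y) / 2 < 1).
  { intros y Hy. split. apply Rmult_lt_0_compat; [|lra]. nra. nra. }
  assert (HPd : forall p, 0 < p < 1 -> is_derive Phi p (d1 p)).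
  { intros p Hp. apply (is_derive_ext_loc phi). 2: apply Hd1; auto.
    apply locally_R with (Rmin p (1 - p)). apply Rmin_glb_lt; lra.
    intros z Hz. unfold Phi. rewrite clamp_id; auto.
    apply Rabs_lt_between in Hz. pose proof (Rmin_l p (1 - p)). pose proof (Rmin_r p (1 - p)). lra. }
  assert (HD1 : forall y, -1 < y < 1 -> is_derive H y (H1 y)).
  { intros y Hy. unfold H, H1.
    apply (is_derive_minus (fun y => Phi (D * (1 - y) / 2)) (fun y => b0 * y)).
    - replace (- (D / 2) * d1 (D * (1 - y) / 2)) with (scal (- (D / 2)) (d1 (D * (1 - y) / 2))) by reflexivity.
      apply (is_derive_comp Phi (fun y => D * (1 - y) / 2)). apply HPd; auto.
      auto_derive; auto. fixeq; field.
    - auto_derive; auto. fixeq; ring. }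
  assert (HD2 : forall y, -1 < y < 1 -> is_derive H1 y (H2 y)).
  { intros y Hy. unfold H1, H2.
    replace (D * D / 4 * d2 (D * (1 - y) / 2)) with (minus (scal (- (D / 2)) (scal (- (D / 2)) (d2 (D * (1 - y) / 2)))) (@zero R_AbsRing))
      by (unfold minus, plus, opp, scal, zero; simpl; unfold mult; simpl; field).
    apply (is_derive_minus (fun y => - (D / 2) * d1 (D * (1 - y) / 2)) (fun _ => b0)).
    - apply (is_derive_scal (fun y => d1 (D * (1 - y) / 2))).
      apply (is_derive_comp d1 (fun y => D * (1 - y) / 2)). apply Hd2; auto.
      auto_derive; auto. fixeq; field.
    - auto_derive; auto. }
  assert (HB : forall y, -1 < y < 1 -> Rabs (H2 y) <= M * Rpower (1 - y) (alpha - 2)).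
  { intros y Hy. unfold H2, M. rewrite Rabs_mult, Rabs_right by (apply Rle_ge; nra).
    eapply Rle_trans. apply Rmult_le_compat_l. nra. apply Hd2b; auto.
    replace (D * (1 - y) / 2) with ((D / 2) * (1 - y)) by field.
    rewrite rp_mul by lra.
    assert (E : D * D / 4 * Rpower (D / 2) (alpha - 2) = Rpower (D / 2) alpha).
    { replace (D * D / 4) with ((D / 2) ^ 2) by field. rewrite <- rp_sq by lra.
      rewrite <- Rpower_plus. f_equal; ring. }
    assert (Rpower (D / 2) alpha <= Rpower D alpha) by (apply rp_mono_pos; lra).
    pose proof (rp_pos (1 - y) (alpha - 2)).
    replace (D * D / 4 * (A0 * (Rpower (D / 2) (alpha - 2) * Rpower (1 - y) (alpha - 2))))
      with (A0 * (D * D / 4 * Rpower (D / 2) (alpha - 2)) * Rpower (1 - y) (alpha - 2)) by ring.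
    rewrite E. apply Rmult_le_compat_r. lra. apply Rmult_le_compat_l; lra. }
  assert (H10 : H1 0 = 0).
  { unfold H1, b0. replace (D * (1 - 0) / 2) with (D / 2) by field. ring. }
  set (K := M * (2 + / (1 - alpha))).
  assert (HK : 0 <= K) by (unfold K; assert (0 < / (1 - alpha)) by (apply Rinv_0_lt_compat; lra); nra).
  pose proof (deriv_bound H1 H2 alpha M Ha (Rlt_le _ _ HM) HD2 HB H10) as HH1.
  pose proof (holder H H1 alpha K Ha HK HHc HD1 HH1) as HHo.
  assert (HK1 : 0 <= K / alpha) by (apply Rdiv_le_0_compat; lra).
  pose proof (sd_bound H H1 H2 alpha M (K / alpha) Ha (Rlt_le _ _ HM) HK1 HHc HD1 HD2 HB HHo) as Hsd.
  set (g := fun th => H (cos th)).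
  set (r := (L / 4)%nat).
  assert (HA : 0 <= 8 * M + 10 * (K / alpha)) by lra.
  destruct (jackson g (8 * M + 10 * (K / alpha)) (2 * alpha) r ltac:(lra) HA) as [P [HPs HPe]].
  - intros t. unfold g. apply (continuous_comp cos H). apply continuous_cos. apply HHc.
  - intros t. unfold g. rewrite cos_neg. auto.
  - intros t. unfold g. replace (t + 2 * PI) with (t + 2 * INR 1 * PI) by (simpl; ring). rewrite cos_period. auto.
  - intros th t Ht _. unfold g. apply Hsd; auto.
  - destruct HPs as [bc Hbc].
    assert (HDn : D <> 0) by lra.
    destruct (sum_cos_poly D HDn bc (4 * r)) as [Q [HQs HQe]].
    set (F := fun x => Q x + b0 * (1 - 2 / D * x)).
    assert (HFs : span pe L F).
    { unfold F. apply span_add. apply span_mono with (4 * r)%nat; auto.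
      unfold r. pose proof (Nat.mul_div_le L 4). lia.
      apply span_scal. apply span_mono with 1%nat; auto.
      apply span_ext with (fun x => 1 + (- 2 / D) * (x * 1)). intros; field; auto.
      apply span_add. apply span_pe_const. apply span_scal. apply span_pe_mulx. apply span_pe_const. }
    destruct HFs as [a Ha'].
    apply EL_le with a. lra.
    intros x Hx.
    set (y := 1 - 2 / D * x).
    assert (Hy : -1 <= y <= 1).
    { assert (Hq1 : 0 <= x / D) by (apply Rdiv_le_0_compat; lra).
      assert (Hq2 : x / D <= D / D) by (apply Rmult_le_compat_r; [left; apply Rinv_0_lt_compat; lra| lra]).
      replace (D / D) with 1 in Hq2 by (field; lra).
      replace y with (1 - 2 * (x / D)) by (unfold y; field; lra). lra. }
    set (th := acos y).
    assert (Hcos : cos th = y) by (apply cos_acos; auto).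
    assert (Hxy : D * (1 - y) / 2 = x) by (unfold y; field; auto).
    assert (E1 : phi x = g th + b0 * y).
    { unfold g. rewrite Hcos. unfold H. rewrite Hxy. unfold Phi. rewrite clamp_id by lra. ring. }
    assert (E2 : poly_eval a L x = P th + b0 * y).
    { assert (Ea : poly_eval a L x = F x) by (unfold poly_eval; rewrite Ha'; reflexivity).
      rewrite Ea. unfold F. rewrite Hbc. rewrite HQe. rewrite Hcos, Hxy. unfold y. auto. }
    rewrite E1, E2. replace (g th + b0 * y - (P th + b0 * y)) with (g th - P th) by ring.
    eapply Rle_trans. apply HPe.
    assert (Hr4 : INR L <= 4 * (INR r + 1)).
    { assert ((L <= 4 * (r + 1))%nat). { unfold r. pose proof (Nat.div_mod L 4). pose proof (Nat.mod_upper_bound L 4). lia. }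
      apply le_INR in H0. rewrite mult_INR, plus_INR in H0. simpl in H0. lra. }
    assert (HL1 : 1 <= INR L) by (apply (le_INR 1); auto).
    pose proof (final_ineq alpha D (INR L) (INR r + 1) Ha ltac:(lra) HL1 ltac:(pose proof (pos_INR r); lra) Hr4) as Fi.
    assert (E3 : 8 * M + 10 * (K / alpha) = M * kap) by (unfold K, kap; field; lra).
    rewrite E3. unfold M.
    replace (4201 * (A0 * Rpower D alpha * kap) * Rpower (INR r + 1) (- (2 * alpha)))
      with (4201 * A0 * kap * (Rpower D alpha * Rpower (INR r + 1) (- (2 * alpha)))) by ring.
    replace (4201 * 16 * A0 * kap * Rpower (D / INR L ^ 2) alpha)
      with (4201 * A0 * kap * (16 * Rpower (D / INR L ^ 2) alpha)) by ring.
    apply Rmult_le_compat_l. nra. auto.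
Qed.
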